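(* Let $R$ be a nonzero polynomial, $m\ge1$ an integer and $\alpha\in\mathbb{C}$ such that $Q(z)=\frac{R(z)}{(z-\alpha)^m}$ is not a polynomial (i.e. $Q$ has a pole at $\alpha$). Then for every $r>0$, the open disk $\{|z|<r\}$ contains no zeroes of $Q^{(n)}$ for all sufficiently large $n$. *)

(* Defs.v *)
From HB Require Import structures.
From mathcomp Require Import all_boot all_order all_algebra.
From mathcomp Require Import complex.
From mathcomp Require Import all_classical all_reals all_analysis.
Set Implicit Arguments. Unset Strict Implicit. Unset Printing Implicit Defensive.
Import Order.TTheory GRing.Theory Num.Theory.
Import numFieldNormedType.Exports.
Local Open Scope ring_scope.
Local Open Scope complex_scope.

(* Q(z) = R(z) / (z - alpha)^m as a function on the complex numbers R[i]
   (junk value at z = alpha; derivatives are only used at z <> alpha). *)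
Definition ratQ (R : realType) (P : {poly R[i]}) (m : nat) (a : R[i])
  : R[i] -> R[i] := fun z => P.[z] / (z - a) ^+ m.

Definition nderiv (K : numFieldType) (n : nat) (f : K -> K) : K -> K :=
  derive1n n f.

(* Main.v *)
Require Import Defs.
From HB Require Import structures.
From mathcomp Require Import all_boot all_order all_algebra.
From mathcomp Require Import complex.
From mathcomp Require Import all_classical all_reals all_analysis.
From mathcomp Require Import ring lra zify.
Import Order.TTheory GRing.Theory Num.Theory.
Import numFieldNormedType.Exports.
Local Open Scope ring_scope.
Local Open Scope complex_scope.
Definition rf (k n : nat) : nat := \prod_(j < n) (k + j)%N.

Lemma rfS k n : (rf k n * (k + n) = k * rf k.+1 n)%N.
Proof.
elim: n => [|n IH]; first by rewrite /rf !big_ord0 addn0 muln1 mul1n.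
rewrite /rf !big_ord_recr /= -/(rf k n) -/(rf k.+1 n).
rewrite IH; nia.
Qed.

Lemma rf_mono k k' n : (k <= k')%N -> (rf k n <= rf k' n)%N.
Proof.
move=> kk; rewrite /rf; elim/big_ind2: _ => //.
  by move=> x1 x2 y1 y2 h1 h2; apply: leq_mul.
by move=> j _; rewrite leq_add2r.
Qed.

Lemma rf_gt0 k n : (0 < k)%N -> (0 < rf k n)%N.
Proof.
move=> k0; rewrite /rf; elim/big_ind: _ => //.
  by move=> x y; rewrite muln_gt0 => -> ->.
by move=> j _; rewrite addn_gt0 k0.
Qed.

Lemma rf_bound k k0 n : (0 < k)%N -> (k < k0)%N -> (n * rf k n <= k0 * rf k0 n)%N.
Proof.
move=> k0p kk.
apply: (@leq_trans (rf k n * (k + n))).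
  by rewrite mulnC leq_mul2l leq_addl orbT.
rewrite rfS; apply: leq_mul; first exact: ltnW.
exact: rf_mono.
Qed.

Section G.
Variable C : numFieldType.

Definition cf (m i n : nat) : C := \prod_(j < n) (i%:R - m%:R - j%:R).

Lemma cf_lt m i n : (i < m)%N -> cf m i n = (-1) ^+ n * (rf (m - i) n)%:R.
Proof.
move=> im; have -> : (-1) ^+ n = \prod_(j < n) (-1 : C) by rewrite prodr_const card_ord.
rewrite /cf /rf natr_prod -big_split /=.
apply: eq_bigr => j _.
rewrite natrD natrB ?(ltnW im) //; ring.
Qed.

Lemma cf_ge m i n : (m <= i)%N -> (i - m < n)%N -> cf m i n = 0.
Proof.
move=> mi imn; rewrite /cf (bigD1 (Ordinal imn)) //= natrB //.
by rewrite subrr mul0r.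
Qed.

Lemma norm_cf_lt m i n : (i < m)%N -> `|cf m i n| = (rf (m - i) n)%:R.
Proof.
by move=> im; rewrite cf_lt // normrM normrX normrN1 expr1n mul1r normr_nat.
Qed.


Lemma key (t : nat -> C) (N m i0 n : nat) (w B : C) :
  (i0 < m)%N -> (i0 < N)%N -> t i0 != 0 -> (forall i, (i < i0)%N -> t i = 0) ->
  (N <= n)%N -> (0 < n)%N -> w != 0 -> `|w| <= B -> 1 <= B ->
  m%:R * B ^+ N * (\sum_(i < N) `|t i|) < n%:R * `|t i0| ->
  \sum_(i < N) t i * cf m i n * w ^+ i != 0.
Proof.
move=> i0m i0N ti0 tlt Nn n0 w0 wB B1 hyp.
set c0 := cf m i0 n.
have c0n : `|c0| = (rf (m - i0) n)%:R by rewrite norm_cf_lt.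
have c0p : 0 < `|c0| by rewrite c0n ltr0n rf_gt0 // subn_gt0.
have wp : 0 < `|w| by rewrite normr_gt0.
have B0 : 0 <= B by apply: le_trans wB.
set D := `|c0| * `|w| ^+ i0.
have Dp : 0 < D by rewrite mulr_gt0 // exprn_gt0.
have BN : 0 <= B ^+ N by rewrite exprn_ge0.
have stepA : forall i : 'I_N, i != Ordinal i0N ->
    n%:R * `|t i * cf m i n * w ^+ i| <= m%:R * B ^+ N * `|t i| * D.
  move=> i ni.
  have rhs0 : 0 <= m%:R * B ^+ N * `|t i| * D.
    by rewrite !mulr_ge0 // ltW.
  have [ilt|ige] := ltnP i i0.
    by rewrite tlt // !(mul0r, normr0, mulr0).
  have [ilm|igm] := ltnP i m; last first.
    rewrite cf_ge //; first by rewrite mulr0 mul0r normr0 mulr0.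
    apply: (leq_ltn_trans (leq_subr _ _)); exact: (leq_trans (ltn_ord i) Nn).
  have ii0 : (i0 < i)%N.
    rewrite ltn_neqAle ige andbT; apply/eqP => e; move: ni.
    by apply/negP; rewrite negbK; apply/eqP/val_inj.
  have hcf : n%:R * `|cf m i n| <= m%:R * `|c0|.
    rewrite norm_cf_lt // c0n -!natrM ler_nat.
    apply: (@leq_trans ((m - i0) * rf (m - i0) n)%N).
      by apply: rf_bound; lia.
    by rewrite leq_mul2r leq_subr orbT.
  have hw : `|w| ^+ i = `|w| ^+ i0 * `|w| ^+ (i - i0).
    by rewrite -exprD subnKC // ltnW.
  have hwB : `|w| ^+ (i - i0) <= B ^+ N.
    apply: (le_trans (y := B ^+ (i - i0))).
      by rewrite lerXn2r // nnegrE // ?normr_ge0.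
    apply: ler_weXn2l => //.
    apply: (leq_trans (leq_subr _ _)); exact: ltnW.
  rewrite !normrM normrX hw.
  have -> : n%:R * (`|t i| * `|cf m i n| * (`|w| ^+ i0 * `|w| ^+ (i - i0))) =
     `|t i| * (n%:R * `|cf m i n|) * `|w| ^+ i0 * `|w| ^+ (i - i0).
    ring.
  have -> : m%:R * B ^+ N * `|t i| * D =
     `|t i| * (m%:R * `|c0|) * `|w| ^+ i0 * B ^+ N.
    rewrite /D; ring.
  apply: ler_pM => //; try by rewrite exprn_ge0.
  apply: ler_wpM2r; first exact: exprn_ge0.
  exact: ler_wpM2l.
rewrite (bigD1 (Ordinal i0N)) /=; last by [].
set rest := \sum_(i < N | i != Ordinal i0N) _.
have hrest : `|rest| < `|t i0 * c0 * w ^+ i0|.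
  rewrite -(ltr_pM2l (x := n%:R)) ?ltr0n //.
  apply: (le_lt_trans (y := n%:R * \sum_(i < N | i != Ordinal i0N) `|t i * cf m i n * w ^+ i|)).
    by rewrite ler_wpM2l // ler_norm_sum.
  rewrite mulr_sumr.
  apply: (le_lt_trans (y := \sum_(i < N | i != Ordinal i0N) m%:R * B ^+ N * `|t i| * D)).
    by apply: ler_sum => i ni; apply: stepA.
  rewrite -mulr_suml -!mulr_sumr.
  apply: (le_lt_trans (y := m%:R * B ^+ N * (\sum_(i < N) `|t i|) * D)).
    apply: ler_wpM2r; first exact: ltW.
    apply: ler_wpM2l; first by rewrite mulr_ge0.
    rewrite [X in _ <= X](bigD1 (Ordinal i0N)) //= lerDr normr_ge0 //.
  rewrite !normrM normrX -/D.
  have -> : n%:R * (`|t i0| * `|c0| * `|w| ^+ i0) = n%:R * `|t i0| * D by rewrite /D; ring.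
  by rewrite ltr_pM2r.
apply/eqP => h.
move: hrest; rewrite (_ : t i0 * c0 * w ^+ i0 = - rest); last first.
  by apply/eqP; rewrite -addr_eq0 h.
by rewrite normrN ltxx.
Qed.

End G.
Arguments cf {C}.

Section S.
Variable C : numFieldType.
Import numFieldNormedType.Exports.

Definition ee (a : C) (i k : nat) (w : C) : C := (w - a)^+i / (w - a)^+k.

Lemma natr_exprpred (w : C) n : w != 0 -> n%:R * w ^+ n.-1 = n%:R * w ^+ n / w.
Proof.
move=> w0; case: n => [|n] /=; first by rewrite !mul0r.
by rewrite exprSr mulrA mulfK.
Qed.

Lemma ee_is_derive (a : C) (i k : nat) (z : C) : z != a ->
  is_derive z (1:C) (ee a i k) ((i%:R - k%:R) * ee a i k.+1 z).
Proof.
move=> za.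
have hs : is_derive z (1:C) (shift (-a) : C -> C) 1 := is_derive_shift _ _ _.
have hX := @is_deriveX C C (shift (-a)) i z 1 1 hs.
have hXk := @is_deriveX C C (shift (-a)) k z 1 1 hs.
have w0 : z - a != 0 by rewrite subr_eq0.
have nz : (shift (-a) ^+ k) z != 0 by rewrite exprfctE /= expf_neq0.
have hV : is_derive z (1:C) (fun y => ((shift (-a) ^+ k) y)^-1)
   (- ((shift (-a) ^+ k) z)^-2 *: ((k%:R * (shift (-a) z)^+k.-1) *: 1)).
  apply: DeriveDef; first by apply: derivableV => //; case: hXk.
  by rewrite deriveV // derive_val.
have hM := is_deriveM hX hV.
have -> : ee a i k = (shift (-a))^+i * (fun y => ((shift (-a) ^+ k) y)^-1).
  by apply/funext => y; rewrite /ee /= !exprfctE.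
apply: is_derive_eq hM _.
rewrite /= !exprfctE /shift /= /ee.
rewrite /GRing.scale /=.
have B0 : (z - a) ^+ k != 0 by rewrite expf_neq0.
rewrite !mulr1 !natr_exprpred // (exprSr (z - a) k).
move: ((z - a) ^+ i) ((z - a) ^+ k) (z - a) B0 w0 => A B w B0 w0.
field.
by rewrite B0 w0.
Qed.

Definition gg (t : nat -> C) (N m : nat) (a : C) (n : nat) (z : C) : C :=
  \sum_(i < N) t i * cf m i n * ee a i (m + n) z.

Lemma gg_is_derive t N m (a : C) n (z : C) : z != a ->
  is_derive z (1:C) (gg t N m a n) (gg t N m a n.+1 z).
Proof.
move=> za.
have -> : gg t N m a n = \sum_(i < N) (fun z => t i * cf m i n * ee a i (m + n) z).
  by apply/funext => y; rewrite /gg fct_sumE.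
apply: is_derive_eq.
  apply: is_derive_sum => i.
  have -> : (fun z => t i * cf m i n * ee a i (m + n) z) = (t i * cf m i n) *: ee a i (m + n).
    by apply/funext => y.
  apply: is_deriveZ; exact: ee_is_derive.
rewrite /gg; apply: eq_bigr => i _.
rewrite /cf big_ord_recr /= addnS natrD.
rewrite /GRing.scale /=.
by rewrite !mulrA opprD addrA.
Qed.

Lemma nderiv_formula t N m (a : C) (f : C -> C) :
  (forall z, z != a -> f z = gg t N m a 0 z) ->
  forall n z, z != a -> derive1n n f z = gg t N m a n z.
Proof.
move=> h0; elim=> [|n IH] z za; first exact: h0.
rewrite /derive1n iterS -/(derive1n n f) derive1E.
have nb : \forall w \near z, w != a.
  apply/nbhs_ballP; exists `|z - a|; first by rewrite /= normr_gt0 subr_eq0.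
  move=> w /= zw; apply/eqP => wa; move: zw; rewrite wa /ball /= ltxx.
  done.
rewrite (near_eq_derive (g := gg t N m a n)); last first.
  by apply: filterS nb => w wa; exact: IH.
by have := gg_is_derive t N m a n z za; case.
Qed.
Lemma dummy : True. Proof. by [].
Qed.

End S.
Arguments gg {C}.
Arguments ee {C}.

Lemma archC {R : realType} {x : R[i]} : 0 <= x -> exists n : nat, x < n%:R.
Proof.
move=> x0.
have xr : x \is Num.real by apply: ger0_real.
rewrite -(RRe_real xr) in x0 *.
rewrite ler0c in x0.
exists (Num.bound (complex.Re x)).
have := archi_boundP x0.
rewrite -ltcR.
by rewrite -(rmorph_nat (real_complex R)).
Qed.

Theorem lemma4p8 (R : realType) (P : {poly R[i]}) (m : nat) (a : R[i]) :
  P != 0 -> (1 <= m)%N ->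
  ~ (exists p : {poly R[i]}, forall z : R[i], z != a -> ratQ P m a z = p.[z]) ->
  forall r : R, 0 < r ->
  exists N : nat, forall n : nat, (N <= n)%N ->
    forall z : R[i], `|z| < r%:C -> z != a ->
      nderiv n (ratQ P m a) z != 0.
Proof.
move=> P0 m1 nonpoly r r0.
set T := P \Po ('X + a%:P).
have hP : forall z, P.[z] = T.[z - a].
  by move=> z; rewrite horner_comp hornerD hornerX hornerC subrK.
have hQ : forall z, z != a -> ratQ P m a z = gg (fun i => T`_i) (size T) m a 0 z.
  move=> z za; rewrite /ratQ /gg hP horner_coef mulr_suml.
  by apply: eq_bigr => i _; rewrite /cf big_ord0 mulr1 addn0 /ee mulrA.
have [ex|nex] := boolP [exists i : 'I_m, T`_i != 0]; last first.
  exfalso; apply: nonpoly.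
  exists (\sum_(i < size T) (T`_i *: ('X - a%:P) ^+ (i - m))).
  move=> z za; rewrite hQ // /gg horner_sum; apply: eq_bigr => i _.
  rewrite hornerZ horner_exp hornerXsubC /cf big_ord0 mulr1 addn0 /ee.
  have [im|mi] := ltnP i m.
    have -> : T`_i = 0.
      apply/eqP; apply: contraNT nex => h; apply/existsP; exists (Ordinal im).
      by [].
    by rewrite !mul0r.
  have w0 : z - a != 0 by rewrite subr_eq0.
  have -> : (z - a) ^+ i = (z - a) ^+ (i - m) * (z - a) ^+ m by rewrite -exprD subnK.
  by rewrite mulfK // expf_neq0.
have ex' : exists i, (i < m)%N && (T`_i != 0).
  by case/existsP: ex => i hi; exists i; rewrite ltn_ord hi.
case: (@ex_minnP (fun i => (i < m)%N && (T`_i != 0)) ex') => i0 /andP[i0m ti0] imin.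
have tlt : forall i, (i < i0)%N -> T`_i = 0.
  move=> i ii0; apply/eqP; apply/negPn/negP => ne.
  have := imin i; rewrite ne andbT (ltn_trans ii0 i0m) => /(_ isT).
  by rewrite leqNgt ii0.
have i0N : (i0 < size T)%N.
  by rewrite ltnNge; apply/negP => h; move: ti0; rewrite nth_default // eqxx.
set B : R[i] := 1 + r%:C + `|a|.
set M := \sum_(i < size T) `|T`_i|.
have tn : 0 < `|T`_i0| by rewrite normr_gt0.
have rC : 0 <= r%:C by rewrite ler0c ltW.
have B1 : 1 <= B by rewrite /B -addrA lerDl addr_ge0.
have X0 : 0 <= m%:R * B ^+ size T * M / `|T`_i0|.
  apply: mulr_ge0; last by rewrite invr_ge0 ltW.
  have B0 : 0 <= B by apply: le_trans B1.
  rewrite !mulr_ge0 ?ler0n ?exprn_ge0 ?sumr_ge0 //.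
have [N0 hN0] := archC X0.
exists (N0 + size T).+1 => n hn z zr za.
rewrite /nderiv (@nderiv_formula _ _ _ _ _ _ hQ) //.
have w0 : z - a != 0 by rewrite subr_eq0.
have -> : gg (fun i => T`_i) (size T) m a n z =
   (\sum_(i < size T) T`_i * cf m i n * (z - a) ^+ i) / (z - a) ^+ (m + n).
  by rewrite /gg mulr_suml; apply: eq_bigr => i _; rewrite /ee mulrA.
rewrite mulf_neq0 ?invr_eq0 ?expf_neq0 //.
apply: (@key _ (fun i => T`_i) (size T) m i0 n (z - a) B) => //.
- exact: leq_trans (leq_trans (leq_addl N0 _) (leqnSn _)) hn.
- exact: leq_trans (ltn0Sn _) hn.
- apply: (le_trans (ler_normB _ _)).
  rewrite /B -addrA [1 + _]addrC -addrA.
  apply: lerD; first exact: ltW.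
  by rewrite lerDl.
- have -> : m%:R * B ^+ size T * (\sum_(i < size T) `|T`_i|) =
     (m%:R * B ^+ size T * M / `|T`_i0|) * `|T`_i0|.
    by rewrite divfK // normr_eq0.
  apply: (lt_le_trans (y := N0%:R * `|T`_i0|)); first by rewrite ltr_pM2r.
  apply: ler_wpM2r; first exact: ltW.
  rewrite ler_nat.
  exact: leq_trans (leq_trans (leq_addr _ _) (leqnSn _)) hn.
Qed.
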